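(* Let $D=(V,A)$ be a digraph with weight $w\in\{0,1\}^A$ such that $D$ has a dicut and the minimum weight of a dicut is $\tau\ge2$. Let $e\in A$ with $w_e=1$. If there exists $\emptyset\neq U\subsetneq V$ with $\delta^+_D(U)=\{e\}$ and $w(\delta^-_D(U))=0$, then $e$ is not contained in any dicut of weight exactly $\tau$.
   Context: Digraphs are finite and loopless; parallel arcs allowed. $\delta^+_D(U)$ / $\delta^-_D(U)$ denote arcs leaving/entering $U$. A dicut is an arc set of the form $\delta^-_D(W)$ with $\emptyset\neq W\subsetneq V$ and $\delta^+_D(W)=\emptyset$ (equivalently $\delta^+_D(V\setminus W)$ with no arc entering $V\setminus W$). For an arc set $B$, $w(B)=\sum_{e\in B}w_e$. *)

(* Defs.v *)
From mathcomp Require Import all_boot.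
Set Implicit Arguments. Unset Strict Implicit. Unset Printing Implicit Defensive.

(* A digraph D = (V, A): finite vertex type V, finite arc type A, each arc
   a has a tail and a head; parallel arcs are allowed (A is an arbitrary
   finType), loops are excluded by the hypothesis [loopless]. *)
Definition loopless (V A : finType) (tail head : A -> V) : Prop :=
  forall a : A, tail a != head a.

Definition dout (V A : finType) (tail head : A -> V) (U : {set V}) : {set A} :=
  [set a | (tail a \in U) && (head a \notin U)].

Definition din (V A : finType) (tail head : A -> V) (U : {set V}) : {set A} :=
  [set a | (tail a \notin U) && (head a \in U)].

Definition is_dicut (V A : finType) (tail head : A -> V) (B : {set A}) : Prop :=
  exists W : {set V}, [/\ W != set0, W != setT,
     dout tail head W = set0 & B = din tail head W].

Definition weight (A : finType) (w : A -> bool) (B : {set A}) : nat :=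
  \sum_(e in B) (w e : nat).

(* Main.v *)
Require Import Defs.
From mathcomp Require Import all_boot.

Lemma weight_card (A : finType) (w : A -> bool) (B : {set A}) :
  weight w B = #|B :&: [set a | w a]|.
Proof.
rewrite /weight -sum1_card.
rewrite [RHS](eq_bigl (fun a => (a \in B) && w a)); last by move=> a; rewrite !inE.
rewrite big_mkcondr /=.
by apply: eq_bigr => a _; case: (w a).
Qed.

Theorem lemma2 (V A : finType) (tail head : A -> V) (w : A -> bool)
  (tau : nat) (e : A) :
  loopless tail head ->
  (* D has a dicut, and tau is the minimum weight of a dicut *)
  (exists B : {set A}, is_dicut tail head B /\ weight w B = tau) ->
  (forall B : {set A}, is_dicut tail head B -> tau <= weight w B) ->
  2 <= tau ->
  w e = true ->
  (exists U : {set V}, [/\ U != set0, U != setT,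
       dout tail head U = [set e] & weight w (din tail head U) = 0]) ->
  forall B : {set A}, is_dicut tail head B -> weight w B = tau -> e \notin B.
Proof.
move=> _ _ Hmin H2 we [U [U0 UT HdU HwU]] B [W [W0 WT HdW ->]] HwB.
apply/negP => eB.
have doW : forall a, tail a \in W -> head a \in W.
  move=> a ta; apply/negPn/negP => ha.
  have : a \in dout tail head W by rewrite inE ta ha.
  by rewrite HdW inE.
have doU : forall a, tail a \in U -> head a \notin U -> a = e.
  move=> a ta ha.
  have : a \in dout tail head U by rewrite inE ta ha.
  by rewrite HdU inE => /eqP.
have : e \in dout tail head U by rewrite HdU inE.
rewrite inE => /andP [teU heU].
move: eB; rewrite inE => /andP [teW heW].
have wU : forall a, tail a \notin U -> head a \in U -> w a = false.
  move=> a ta ha; apply/negP => wa.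
  move: HwU; rewrite weight_card => /eqP; rewrite cards_eq0 => /eqP H.
  have : a \in din tail head U :&: [set a | w a] by rewrite !inE ta ha wa.
  by rewrite H inE.
set Ws := [set a | w a].
have Hc : #|din tail head W :&: Ws| = 1 + #|(din tail head W :&: Ws) :\ e|.
  by rewrite (cardsD1 e) !inE teW heW we.
have key : forall X : {set V}, X != set0 -> X != setT ->
    (forall a, tail a \in X -> head a \notin X -> False) ->
    (forall a, w a -> tail a \notin X -> head a \in X ->
       [&& tail a \notin W, head a \in W & a != e]) -> False.
  move=> X X0 XT HX Hsub.
  have dX : is_dicut tail head (din tail head X).
    exists X; split => //; apply/eqP; rewrite -subset0; apply/subsetP => a.
    by rewrite inE => /andP [t h]; case: (HX a t h).
  have := Hmin _ dX; rewrite weight_card.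
  have : #|din tail head X :&: Ws| <= #|(din tail head W :&: Ws) :\ e|.
    apply: subset_leq_card; apply/subsetP => a.
    rewrite !inE => /andP [/andP [t h] wa].
    by case/and3P: (Hsub a wa t h) => -> -> ->; rewrite wa.
  move: HwB; rewrite weight_card Hc => <-.
  rewrite add1n => h1 h2; have := leq_trans h2 h1; by rewrite ltnn.
case: (boolP (W :|: U == setT)) => [/eqP WUT | WUT].
  case: (boolP (W :&: U == set0)) => [/eqP WU0 | WU0].
    have : #|din tail head W :&: Ws| <= 1.
      rewrite -(cards1 e); apply: subset_leq_card; apply/subsetP => a.
      rewrite !inE => /andP [/andP [ta ha] _].
      have tU : tail a \in U.
        have : tail a \in W :|: U by rewrite WUT inE.
        by rewrite inE (negbTE ta).
      have hU : head a \notin U.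
        apply/negP => hU.
        have : head a \in W :&: U by rewrite inE ha hU.
        by rewrite WU0 inE.
      by rewrite (doU a tU hU).
    move: HwB; rewrite weight_card => ->.
    by move=> h; have := leq_trans H2 h.
  apply: (key (W :&: U)) => //.
  - apply/negP => /eqP H.
    have : head e \in W :&: U by rewrite H inE.
    by rewrite inE (negbTE heU) andbF.
  - move=> a; rewrite !inE => /andP [ta tu] hn.
    have hW := doW a ta.
    move: hn; rewrite hW /= => hu.
    have := doU a tu hu => aE; subst a.
    by rewrite ta in teW.
  - move=> a wa; rewrite !inE => tn /andP [hW hU].
    rewrite hW /=.
    case: (boolP (tail a \in W)) => tW.
      move: tn; rewrite tW /= => tU.
      by rewrite (wU a tU hU) in wa.
    rewrite /=; apply/eqP => aE; subst a.
    by rewrite hU in heU.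
apply: (key (W :|: U)) => //.
- apply/negP => /eqP H.
  have : head e \in W :|: U by rewrite inE heW.
  by rewrite H inE.
- move=> a; rewrite !inE => /orP [tW | tU]; rewrite negb_or => /andP [hW hU].
    by rewrite (doW a tW) in hW.
  have := doU a tU hU => aE; subst a.
  by rewrite heW in hW.
- move=> a wa; rewrite !inE negb_or => /andP [tW tU] /orP [hW | hU].
    rewrite tW hW /=; apply/eqP => aE; subst a.
    by rewrite teU in tU.
  by rewrite (wU a tU hU) in wa.
Qed.
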